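(* In the cone setting of the context, for any $h\in\mathcal B_{\mathbb C}$ and all $z\in\mathbb C$ with $|z|<(\sqrt2\|h\|)^{-1}$ we have $e+zh\in\mathcal C_{\mathbb C}$ and \[\delta_{\mathcal C}(e,e+zh)\le\ln\Big(\frac{1+|z|\sqrt2\|h\|}{1-|z|\sqrt2\|h\|}\Big)<\infty.\]
   Context: Cone setting. $V$ is a real topological vector space, $\mathcal S\subset V'$ a set of linear functionals such that $\ell(x)=0$ for all $\ell\in\mathcal S$ implies $x=0$, $C_{\mathbb R}=\{h\in V\setminus\{0\}:\ell(h)\ge0\ \forall\ell\in\mathcal S\}$, and $e\in C_{\mathbb R}$ is such that for every $h\in V$ some $\lambda\ge0$ has $\lambda e-h\in C_{\mathbb R}$. Norm $\|h\|=\inf\{\lambda\ge0:\ell(\lambda e\pm h)\ge0\ \forall\ell\in\mathcal S\}$; $\mathcal B_{\mathbb R}$ the completion of $V$; $\mathcal C_{\mathbb R}=\{h\in\mathcal B_{\mathbb R}\setminus\{0\}:\ell(h)\ge0\ \forall\ell\in\mathcal S\}$; $\mathcal C'_{\mathbb R}=\{\ell\in\mathcal B'_{\mathbb R}:\ell\ge0\text{ on }\mathcal C_{\mathbb R}\}$. $\mathcal S_*$ is the weak-$*$ closure of the convex hull of $\{\lambda\ell:\lambda>0,\ell\in\mathcal S\}$; there exist $m\in\mathcal S_*$, $\kappa\in(0,1)$ with $m(e)=1$ and $m(h)\ge\kappa\|h\|$ on $\mathcal C_{\mathbb R}$. $\mathcal B_{\mathbb C}$ is the complexification (norm $\|x+iy\|=\sup_\theta(\|\Re(e^{i\theta}(x+iy))\|^2+\|\Im(e^{i\theta}(x+iy))\|^2)^{1/2}$),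 real functionals extended complex-linearly. $\mathcal C_{\mathbb C}=\{z(x+iy):z\ne0,x,y\in\mathcal C_{\mathbb R}\}$, $\mathcal C'_{\mathbb C}=\{\ell\in\mathcal B'_{\mathbb C}:\ell(h)\ne0\ \forall h\in\mathcal C_{\mathbb C}\}$. For $h,g\in\mathcal C_{\mathbb C}$, $E(h,g)=\{\ell(h)/\ell(g):\ell\in\mathcal C'_{\mathbb C}\}$ and $\delta_{\mathcal C}(h,g)=\ln\frac{\sup_{z\in E(h,g)}|z|}{\inf_{z\in E(h,g)}|z|}$. *)

(* Defs.v *)
From HB Require Import structures.
From mathcomp Require Import all_boot all_order all_algebra.
From mathcomp Require Import all_classical all_reals all_analysis.
From mathcomp Require Import complex.
Set Implicit Arguments. Unset Strict Implicit. Unset Printing Implicit Defensive.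
Import Order.TTheory GRing.Theory Num.Theory.
Import numFieldNormedType.Exports.
Local Open Scope classical_set_scope.
Local Open Scope ring_scope.

Section ConeDefs.
Variable R : realType.

Definition cmod (z : R[i]) : R := Num.sqrt (complex.Re z ^+ 2 + complex.Im z ^+ 2).

Definition is_rlin (U W : lmodType R) (f : U -> W) :=
  forall (a : R) (u v : U), f (a *: u + v) = a *: f u + f v.

Definition in_dual (V : topologicalLmodType R) (l : V -> R) :=
  is_rlin (l : V -> R^o) /\ continuous l.

Section OnV.
Variables (V : topologicalLmodType R) (S : set (V -> R)).

Definition coneV : set V := [set h | h != 0 /\ forall l, S l -> 0 <= l h].

Definition cone_norm (e h : V) : R :=
  inf [set lam : R | 0 <= lam /\
        forall l, S l -> 0 <= l (lam *: e + h) /\ 0 <= l (lam *: e - h)].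

Definition pos_mult : set (V -> R) :=
  [set f | exists lam l, 0 < lam /\ S l /\ f = (fun v => lam * l v)].
Definition conv_hull (A : set (V -> R)) : set (V -> R) :=
  [set f | exists (n : nat) (w : 'I_n.+1 -> R) (g : 'I_n.+1 -> V -> R),
     (forall i, 0 <= w i) /\ \sum_(i < n.+1) w i = 1 /\ (forall i, A (g i)) /\
     f = (fun v => \sum_(i < n.+1) w i * g i v)].

(* A point m of V'
   is in the weak-* closure of a set iff every basic weak-* neighbourhood
   {f : |f v - m v| < eps for v in vs} (vs finite) meets the set. *)
Definition Sstar : set (V -> R) :=
  [set m | in_dual m /\
     forall (vs : seq V) (eps : R), 0 < eps ->
       exists f, conv_hull pos_mult f /\
         forall v, v \in vs -> `|f v - m v| < eps].
End OnV.

Section OnB.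
Variables (V : topologicalLmodType R) (B : completeNormedModType R)
          (iota : V -> B).

Definition ext_of (l : V -> R) (L : B -> R) :=
  is_rlin (L : B -> R^o) /\ continuous L /\ forall v, L (iota v) = l v.

Definition coneB (S : set (V -> R)) : set B :=
  [set h | h != 0 /\ forall l, S l -> forall L, ext_of l L -> 0 <= L h].
End OnB.

Section Complexification.
Variable B : normedModType R.

(* B_C is modelled as pairs (x, y) standing for x + i y *)
Definition cplx_scale (c : R[i]) (u : B * B) : B * B :=
  (complex.Re c *: u.1 - complex.Im c *: u.2,
   complex.Im c *: u.1 + complex.Re c *: u.2).

Definition cnorm (u : B * B) : R :=
  sup [set Num.sqrt (`|cos t *: u.1 - sin t *: u.2| ^+ 2 +
                     `|sin t *: u.1 + cos t *: u.2| ^+ 2) | t in [set: R]].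

Definition in_cdual (L : B * B -> R[i]) :=
  (forall u v, L (u + v) = L u + L v) /\
  (forall c u, L (cplx_scale c u) = c * L u) /\
  (forall u (eps : R), 0 < eps -> exists2 d : R, 0 < d &
     forall v, cnorm (v - u) < d -> cmod (L v - L u) < eps).

Variable CR : set B.

Definition coneC : set (B * B) :=
  [set w | exists c x y, c != 0 /\ CR x /\ CR y /\ w = cplx_scale c (x, y)].

Definition dual_coneC : set (B * B -> R[i]) :=
  [set L | in_cdual L /\ forall w, coneC w -> L w != 0].

Definition Eset (h g : B * B) : set R[i] :=
  [set L h / L g | L in dual_coneC].

Definition deltaC (h g : B * B) : \bar R :=
  let s := ereal_sup [set (cmod z)%:E | z in Eset h g] in
  let i := ereal_inf [set (cmod z)%:E | z in Eset h g] in
  match s, i with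
  | EFin s', EFin i' => if 0 < i' then (ln (s' / i'))%:E else +oo%E
  | _, _ => +oo%E
  end.
End Complexification.

End ConeDefs.

(* Main.v *)
Require Import Defs.
From HB Require Import structures.
From mathcomp Require Import all_boot all_order all_algebra.
From mathcomp Require Import all_classical all_reals all_analysis.
From mathcomp Require Import complex.
Import Order.TTheory GRing.Theory Num.Theory.
Import numFieldNormedType.Exports.
Local Open Scope classical_set_scope.
Local Open Scope ring_scope.
From mathcomp Require Import lra ring.
Set Implicit Arguments.

Section H.
Variable R : realType.
Local Open Scope complex_scope.

Lemma cmodE (z : R[i]) : cmod z = Normc.normc z.
Proof. by case: z. Qed.
Lemma cmod_ge0 (z : R[i]) : 0 <= cmod z.
Proof. exact: sqrtr_ge0. Qed.
Lemma cmodM (z w : R[i]) : cmod (z * w) = cmod z * cmod w.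
Proof. by rewrite !cmodE Normc.normcM. Qed.
Lemma cmodD (z w : R[i]) : cmod (z + w) <= cmod z + cmod w.
Proof. by rewrite !cmodE; exact: le_normcD. Qed.
Lemma cmodN (z : R[i]) : cmod (- z) = cmod z.
Proof. by rewrite !cmodE; exact: normcN. Qed.
Lemma cmodV (z : R[i]) : cmod (z^-1) = (cmod z)^-1.
Proof. by rewrite !cmodE Normc.normcV. Qed.
Lemma cmod_eq0 (z : R[i]) : (cmod z == 0) = (z == 0).
Proof. apply/eqP/eqP => [|->]; last by rewrite cmodE Normc.normc0.
by rewrite cmodE; exact: Normc.eq0_normc. Qed.
Lemma cmod_gt0 (z : R[i]) : (0 < cmod z) = (z != 0).
Proof. by rewrite lt_def cmod_ge0 cmod_eq0 andbT. Qed.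
Lemma cmodi (z : R[i]) : cmod ('i * z) = cmod z.
Proof. by rewrite cmodM /cmod /= expr0n expr1n add0r sqrtr1 mul1r. Qed.
Lemma cmodR (x : R) : cmod (x%:C) = `|x|.
Proof. by rewrite /cmod /= expr0n addr0 sqrtr_sqr. Qed.
Lemma sqrt_le_add (a b : R) : Num.sqrt (a ^+ 2 + b ^+ 2) <= `|a| + `|b|.
Proof.
have h : 0 <= `|a| + `|b| by rewrite addr_ge0.
rewrite -(ger0_norm h) -sqrtr_sqr ler_sqrt ?sqr_ge0 //.
have := normr_ge0 a; have := normr_ge0 b; rewrite -[a^+2]real_normK ?num_real // -[b^+2]real_normK ?num_real //.
move=> *; nra. Qed.
Lemma cmod_le_ReIm (z : R[i]) : cmod z <= `|complex.Re z| + `|complex.Im z|.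
Proof. case: z => a b; rewrite /cmod /=.
have h : 0 <= `|a| + `|b| by rewrite addr_ge0.
rewrite -(ger0_norm h) -sqrtr_sqr ler_sqrt ?sqr_ge0 //.
have := normr_ge0 a; have := normr_ge0 b; rewrite -[a^+2]real_normK ?num_real // -[b^+2]real_normK ?num_real //.
move=> *; nra. Qed.
Lemma ReM (z w : R[i]) : complex.Re (z * w) = complex.Re z * complex.Re w - complex.Im z * complex.Im w.
Proof. by case: z; case: w. Qed.
Lemma ImM (z w : R[i]) : complex.Im (z * w) = complex.Re z * complex.Im w + complex.Im z * complex.Re w.
Proof. by case: z; case: w. Qed.
Lemma cplx_eq (z w : R[i]) : complex.Re z = complex.Re w -> complex.Im z = complex.Im w -> z = w.
Proof. by case: z; case: w => /= a b c d -> ->. Qed.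

Lemma CS (p q X Y : R) : 0 <= X -> 0 <= Y ->
  `|p| * X + `|q| * Y <= Num.sqrt (p^+2 + q^+2) * Num.sqrt (X^+2 + Y^+2).
Proof.
move=> X0 Y0; rewrite -sqrtrM ?addr_ge0 ?sqr_ge0 //.
have h : 0 <= `|p| * X + `|q| * Y by rewrite addr_ge0 // mulr_ge0.
rewrite -(ger0_norm h) -sqrtr_sqr ler_sqrt ?mulr_ge0 ?addr_ge0 ?sqr_ge0 //.
rewrite -[p^+2]real_normK ?num_real // -[q^+2]real_normK ?num_real //.
have := normr_ge0 p; have := normr_ge0 q.
set P := `|p|; set Q := `|q|; move=> *.
have := sqr_ge0 (P * Y - Q * X); nra.
Qed.

Section Lin.
Variables (U W : lmodType R) (f : U -> W) (Hf : is_rlin f).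
Lemma rlin0 : f 0 = 0.
Proof. have := Hf 1 0 0; rewrite scale1r addr0 scale1r => h.
by apply/eqP; rewrite -(subrr (f 0)) {2}h addrK. Qed.
Lemma rlinD u v : f (u + v) = f u + f v.
Proof. by have := Hf 1 u v; rewrite !scale1r. Qed.
Lemma rlinZ a u : f (a *: u) = a *: f u.
Proof. by have := Hf a u 0; rewrite !addr0 rlin0 addr0. Qed.
Lemma rlinN u : f (- u) = - f u.
Proof. by rewrite -scaleN1r rlinZ scaleN1r. Qed.
Lemma rlinB u v : f (u - v) = f u - f v.
Proof. by rewrite rlinD rlinN. Qed.
End Lin.

Lemma cnorm_ge (B : normedModType R) (w : B * B) :
  Num.sqrt (`|w.1| ^+ 2 + `|w.2| ^+ 2) <= cnorm w.
Proof.
rewrite /cnorm; apply: sup_upper_bound; last by exists 0 => //; rewrite cos0 sin0 !scale1r !scale0r subr0 add0r.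
split; first by exists (Num.sqrt (`|w.1| ^+ 2 + `|w.2| ^+ 2)), 0 => //; rewrite cos0 sin0 !scale1r !scale0r subr0 add0r.
exists (2 * (`|w.1| + `|w.2|)) => x [t _ <-].
apply: le_trans (sqrt_le_add _ _) _.
have h1 : forall (a b : B), `|cos t *: a - sin t *: b| <= `|a| + `|b|.
  move=> a b; apply: le_trans (ler_normB _ _) _; rewrite !normrZ.
  by apply: lerD; rewrite ler_piMl // ?cos_max ?sin_max.
have h2 : forall (a b : B), `|sin t *: a + cos t *: b| <= `|a| + `|b|.
  move=> a b; apply: le_trans (ler_normD _ _) _; rewrite !normrZ.
  by apply: lerD; rewrite ler_piMl // ?cos_max ?sin_max.
rewrite !normr_id; have := h1 w.1 w.2; have := h2 w.1 w.2; lra.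
Qed.

Lemma slinZ (U : lmodType R) (f : U -> R^o) (Hf : is_rlin f) a u : f (a *: u) = a * f u.
Proof. exact: (rlinZ Hf a u). Qed.

Lemma cont_ball (B : normedModType R) (L : B -> R) (cL : continuous L) (v : B) (eps : R) :
  0 < eps -> exists2 d, 0 < d & forall x, `|v - x| < d -> `|L v - L x| < eps.
Proof.
move=> e0; have := cL v; move/cvgrPdist_lt => /(_ eps e0); case/nbhs_ballP => d d0 hd.
exists d => // x hx; apply: hd; rewrite -ball_normE /=; exact: hx.
Qed.

Lemma coneB_int (V : topologicalLmodType R) (S : set (V -> R))
  (HS : forall l, S l -> in_dual l)
  (Hsep : forall x : V, (forall l, S l -> l x = 0) -> x = 0)
  (e : V) (He : coneV S e)
  (Hunit : forall h : V, exists lam : R, 0 <= lam /\ coneV S (lam *: e - h))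
  (B : completeNormedModType R) (iota : V -> B)
  (Hiota : is_rlin iota)
  (Hnorm : forall v, `|iota v| = cone_norm S e v)
  (Hdense : forall (b : B) (eps : R), 0 < eps -> exists v, `|b - iota v| < eps)
  (v : B) : `|v| < 1 -> coneB iota S (iota e + v).
Proof.
move=> hv.
have lin l : S l -> is_rlin (l : V -> R^o) by move=> /HS [].
have le0 l : S l -> 0 <= l e by move=> Sl; exact: He.2 l Sl.
split.
- apply/negP => /eqP h0.
  have [l0 [Sl0 l0e]] : exists l, S l /\ l e != 0.
    apply: contrapT => N; have e0 := He.1; move/negP: e0; apply.
    apply/eqP; apply: Hsep => l Sl; apply: contrapT => ne; apply: N; exists l; split => //; exact/eqP.
  have l0pos : 0 < l0 e by rewrite lt_def l0e le0.
  move: h0; rewrite addrC => /eqP; rewrite addr_eq0 => /eqP hv'.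
  move: hv; rewrite hv' normrN Hnorm; apply/negP; rewrite -leNgt.
  rewrite /cone_norm; apply: lb_le_inf.
    exists 1; split => // l Sl; have hl' := lin l Sl.
    rewrite (rlinB hl') (rlinD hl') (slinZ hl') mul1r.
    by rewrite subrr; have := le0 l Sl; split; lra.
  move=> lam [lam0 hl]; have [_] := hl l0 Sl0.
  have hl' := lin l0 Sl0.
  rewrite (rlinB hl') (slinZ hl').
  move=> hh; rewrite -subr_ge0 -(pmulr_lge0 _ l0pos) mulrBl mul1r; exact: hh.
- move=> l Sl L [HL [cL eL]].
  rewrite rlinD // eL; rewrite leNgt; apply/negP => hneg.
  have eps0 : 0 < - (l e + L v) by lra.
  have [d d0 hd] := cont_ball cL v _ eps0.
  have m0 : 0 < Num.min d (1 - `|v|) by rewrite lt_min d0 /=; lra.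
  have [w hw] := Hdense v _ m0.
  move: hw; rewrite lt_min => /andP [hwd hw1'].
  have hLw := hd (iota w) hwd.
  have hw1 : `|iota w| < 1.
    have -> : iota w = v - (v - iota w) by rewrite opprB addrC subrK.
    apply: le_lt_trans (ler_normB _ _) _.
    lra.
  move: hw1; rewrite Hnorm /cone_norm => /inf_lt [].
    have [lam0 [lam00 [_ h0]]] := Hunit w.
    have [lam1 [lam10 [_ h1]]] := Hunit (- w).
    exists (lam0 + lam1); split; first by rewrite addr_ge0.
    move=> l' Sl'; have := h0 l' Sl'; have := h1 l' Sl'; have := le0 l' Sl'.
    have hl := lin l' Sl'.
    rewrite !(rlinB hl) (rlinD hl) (rlinN hl) !(slinZ hl).
    have := mulr_ge0 lam00 (le0 l' Sl'); have := mulr_ge0 lam10 (le0 l' Sl').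
    by rewrite !mulrDl; split; lra.
  move=> lam [lam00 hl] lam1; have [hl1 _] := hl l Sl.
  have hl' := lin l Sl.
  move: hl1; rewrite (rlinD hl') (slinZ hl').
  move: hLw; rewrite eL ltr_norml => /andP [h1 h2].
  have : lam * l e <= l e by rewrite ler_piMl // ?le0 // ltW.
  lra.
Qed.

Lemma alg_key (X1 X2 Y1 Y2 : R)
  (nv : forall lam, 0 < lam -> ~ (X1 = lam * Y2 /\ X2 = - (lam * Y1)))
  (nv' : forall lam, 0 < lam -> ~ (Y1 = lam * X2 /\ Y2 = - (lam * X1)))
  (nvx : ~ (X1 = X2 /\ X2 = - X1)) (nvy : ~ (Y1 = Y2 /\ Y2 = - Y1)) :
  X1 * Y1 + X2 * Y2 != 0.
Proof.
apply/negP => /eqP rel.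
have n0 : 0 < Y1 ^+ 2 + Y2 ^+ 2.
  rewrite lt_def addr_ge0 ?sqr_ge0 // andbT; apply/negP => /eqP h.
  have y1 : Y1 = 0 by apply/eqP; rewrite -sqrf_eq0 eq_le sqr_ge0 andbT; have := sqr_ge0 Y2; lra.
  have y2 : Y2 = 0 by apply/eqP; rewrite -sqrf_eq0 eq_le sqr_ge0 andbT; have := sqr_ge0 Y1; lra.
  by apply: nvy; rewrite y1 y2 oppr0.
set k := (X1 * Y2 - X2 * Y1) / (Y1 ^+ 2 + Y2 ^+ 2).
have nn : Y1 ^+ 2 + Y2 ^+ 2 != 0 by rewrite gt_eqF.
have kn' : k * (Y1^+2+Y2^+2) = X1*Y2 - X2*Y1 by rewrite /k divfK.
have e1 : X1 = k * Y2.
  apply: (mulIf nn); rewrite (_ : k * Y2 * _ = (k * (Y1^+2+Y2^+2)) * Y2); last by ring.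
  rewrite kn'.
  have : Y1 * (X1 * Y1 + X2 * Y2) = 0 by rewrite rel mulr0.
  move=> h; rewrite -[LHS]subr0 -h; ring.
have e2 : X2 = - (k * Y1).
  apply: (mulIf nn); rewrite (_ : - (k * Y1) * _ = - ((k * (Y1^+2+Y2^+2)) * Y1)); last by ring.
  rewrite kn'.
  have : Y2 * (X1 * Y1 + X2 * Y2) = 0 by rewrite rel mulr0.
  move=> h; rewrite -[LHS]subr0 -h; ring.
have [kp|kn|k0] := ltgtP k 0.
- have lp : 0 < - k^-1 by rewrite oppr_gt0 invr_lt0.
  have k0 : k != 0 by rewrite ltr0_neq0.
  by apply: (nv' _ lp); split; rewrite ?e1 ?e2; field.
- by apply: (nv _ kn).
- by apply: nvx; rewrite e1 e2 k0 !mul0r oppr0.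
Qed.

Lemma ReD (z w : R[i]) : complex.Re (z + w) = complex.Re z + complex.Re w.
Proof. by case: z; case: w. Qed.
Lemma ImD (z w : R[i]) : complex.Im (z + w) = complex.Im z + complex.Im w.
Proof. by case: z; case: w. Qed.
Lemma Rei (z : R[i]) : complex.Re ('i * z) = - complex.Im z.
Proof. by case: z => x y /=; ring. Qed.
Lemma Imi (z : R[i]) : complex.Im ('i * z) = complex.Re z.
Proof. by case: z => x y /=; ring. Qed.
Lemma ReRM (a : R) (z : R[i]) : complex.Re (a%:C * z) = a * complex.Re z.
Proof. by case: z => x y /=; ring. Qed.
Lemma ImRM (a : R) (z : R[i]) : complex.Im (a%:C * z) = a * complex.Im z.
Proof. by case: z => x y /=; ring. Qed.

Section CF.
Variables (B : normedModType R) (L : B * B -> R[i]) (HL : in_cdual L).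
Lemma LD u v : L (u + v) = L u + L v.
Proof. exact: HL.1. Qed.
Lemma LS c u : L (cplx_scale c u) = c * L u.
Proof. exact: HL.2.1. Qed.
Lemma PZ a x : L (a *: x, 0) = a%:C * L (x, 0).
Proof. rewrite -LS /cplx_scale /=; congr L; congr pair; by rewrite /= !(scale0r, scaler0, scale1r, subr0, addr0, add0r, sub0r, oppr0). Qed.
Lemma Lpair x y : L (x, y) = L (x, 0) + 'i * L (y, 0).
Proof. rewrite -LS -LD /cplx_scale /=; congr L; congr pair; by rewrite /= !(scale0r, scaler0, scale1r, subr0, addr0, add0r, sub0r, oppr0). Qed.
Lemma PD x y : L (x + y, 0) = L (x, 0) + L (y, 0).
Proof. rewrite -LD; congr L; congr pair; by rewrite /= !(scale0r, scaler0, scale1r, subr0, addr0, add0r, sub0r, oppr0). Qed.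
Lemma PN x : L (- x, 0) = - L (x, 0).
Proof. by rewrite -scaleN1r PZ rmorphN rmorph1 mulN1r. Qed.
End CF.

Lemma coneB_scale (V : topologicalLmodType R) (S : set (V -> R))
  (B : completeNormedModType R) (iota : V -> B) (lam : R) (x : B) :
  0 < lam -> coneB iota S x -> coneB iota S (lam *: x).
Proof.
move=> lp [x0 hx]; split; first by rewrite scaler_eq0 negb_or x0 gt_eqF.
move=> l Sl L [HL HL']; rewrite (slinZ HL); apply: mulr_ge0; first exact: ltW.
exact: hx l Sl L (conj HL HL').
Qed.

Lemma boundP (V : topologicalLmodType R) (S : set (V -> R))
  (HS : forall l, S l -> in_dual l)
  (Hsep : forall x : V, (forall l, S l -> l x = 0) -> x = 0)
  (e : V) (He : coneV S e)
  (Hunit : forall h : V, exists lam : R, 0 <= lam /\ coneV S (lam *: e - h))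
  (B : completeNormedModType R) (iota : V -> B)
  (Hiota : is_rlin iota)
  (Hnorm : forall v, `|iota v| = cone_norm S e v)
  (Hdense : forall (b : B) (eps : R), 0 < eps -> exists v, `|b - iota v| < eps)
  (L : B * B -> R[i]) (HL : in_cdual L)
  (HnC : forall w, coneC (coneB iota S) w -> L w != 0) (v : B) :
  cmod (L (v, 0)) <= cmod (L (iota e, 0)) * `|v|.
Proof.
have int := coneB_int HS Hsep He Hunit Hiota Hnorm Hdense.
have nv x y : coneB iota S x -> coneB iota S y ->
    ~ (complex.Re (L (x, 0)) = complex.Im (L (y, 0)) /\
       complex.Im (L (x, 0)) = - complex.Re (L (y, 0))).
  move=> cx cy [h1 h2].
  have hc : coneC (coneB iota S) (x, y).
    exists 1, x, y; split; first exact: oner_neq0.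
    split => //; split => //; rewrite /cplx_scale /=; congr pair;
    by rewrite /= !(scale0r, scaler0, scale1r, subr0, addr0, add0r, sub0r, oppr0).
  move: (HnC _ hc); rewrite Lpair //; case/negP.
  move: h1 h2; case: (L (x, 0)) => p1 p2; case: (L (y, 0)) => q1 q2 /= h1 h2.
  apply/eqP; apply: cplx_eq => /=; lra.
rewrite leNgt; apply/negP.
case Ea: (L (iota e, 0)) => [a1 a2]; case Eb: (L (v, 0)) => [b1 b2] hlt.
set A := cmod (a1 +i* a2) in hlt *; set Bm := cmod (b1 +i* b2) in hlt *.
have cb : 0 < Bm by apply: le_lt_trans hlt; rewrite mulr_ge0 ?cmod_ge0.
set mu := A / Bm.
have mu0 : 0 <= mu by rewrite divr_ge0 ?cmod_ge0 // ltW.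
have hmu : `|mu *: v| < 1.
  by rewrite normrZ ger0_norm // mulrAC ltr_pdivrMr // mul1r.
have hmu' : `|- (mu *: v)| < 1 by rewrite normrN.
have cx := int _ hmu; have cy := int _ hmu'.
have PX : L (iota e + mu *: v, 0) = (a1 + mu * b1) +i* (a2 + mu * b2).
  by rewrite PD // PZ // Ea Eb; apply: cplx_eq => /=; ring.
have PY : L (iota e + - (mu *: v), 0) = (a1 - mu * b1) +i* (a2 - mu * b2).
  by rewrite PD // PN // PZ // Ea Eb; apply: cplx_eq => /=; ring.
have hk : (a1 + mu * b1) * (a1 - mu * b1) + (a2 + mu * b2) * (a2 - mu * b2) != 0.
  apply: alg_key.
- move=> lam lp [h1 h2]; apply: (nv _ _ cx (coneB_scale lam lp cy)).
  rewrite PZ // PX PY /=; split; lra.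
- move=> lam lp [h1 h2]; apply: (nv _ _ cy (coneB_scale lam lp cx)).
  rewrite PZ // PX PY /=; split; lra.
- by move=> [h1 h2]; apply: (nv _ _ cx cx); rewrite PX /=.
- by move=> [h1 h2]; apply: (nv _ _ cy cy); rewrite PY /=.
move/negP: hk; apply.
have hab : mu * Bm = A by rewrite divfK // gt_eqF.
have ha : A ^+ 2 = a1 ^+ 2 + a2 ^+ 2 by rewrite sqr_sqrtr // addr_ge0 ?sqr_ge0.
have hb : Bm ^+ 2 = b1 ^+ 2 + b2 ^+ 2 by rewrite sqr_sqrtr // addr_ge0 ?sqr_ge0.
have key : mu ^+ 2 * (b1 ^+ 2 + b2 ^+ 2) = a1 ^+ 2 + a2 ^+ 2.
  by rewrite -ha -hb -exprMn hab.
apply/eqP.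
rewrite (_ : _ + _ = (a1 ^+ 2 + a2 ^+ 2) - mu ^+ 2 * (b1 ^+ 2 + b2 ^+ 2)); last by ring.
by rewrite key subrr.
Qed.

Lemma vec1 (B : lmodType R) (a b : R) (h1 h2 : B) :
  (a *: h1 - b *: h2) - (b *: h1 + a *: h2) = (a - b) *: h1 - (a + b) *: h2.
Proof.
rewrite scalerBl scalerDl opprD opprD -!addrA; congr (_ + _).
rewrite addrCA; congr (_ + _); exact: addrC.
Qed.
Lemma vec2 (B : lmodType R) (a b : R) (h1 h2 : B) :
  (a *: h1 - b *: h2) + (b *: h1 + a *: h2) = (a + b) *: h1 + (a - b) *: h2.
Proof.
rewrite scalerBl !scalerDl addrACA; congr (_ + _).
by rewrite addrC.
Qed.
Lemma vec3 (B : lmodType R) (E u1 u2 : B) :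
  (E + (u1 - u2)) + (E + (u1 + u2)) = 2%:R *: (E + u1).
Proof.
by rewrite scaler_nat mulr2n addrACA [X in _ + X]addrACA addNr addr0 addrACA.
Qed.
Lemma vec4 (B : lmodType R) (E u1 u2 : B) :
  (E + (u1 + u2)) - (E + (u1 - u2)) = 2%:R *: u2.
Proof.
rewrite scaler_nat mulr2n opprD addrACA subrr add0r opprB [u2 - u1]addrC.
by rewrite addrACA subrr add0r.
Qed.

Lemma part1 (V : topologicalLmodType R) (S : set (V -> R))
  (HS : forall l, S l -> in_dual l)
  (Hsep : forall x : V, (forall l, S l -> l x = 0) -> x = 0)
  (e : V) (He : coneV S e)
  (Hunit : forall h : V, exists lam : R, 0 <= lam /\ coneV S (lam *: e - h))
  (B : completeNormedModType R) (iota : V -> B)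
  (Hiota : is_rlin iota)
  (Hnorm : forall v, `|iota v| = cone_norm S e v)
  (Hdense : forall (b : B) (eps : R), 0 < eps -> exists v, `|b - iota v| < eps)
  (h1 h2 : B) (z : R[i]) (Hz : cmod z * Num.sqrt 2 * cnorm (h1, h2) < 1) :
  coneC (coneB iota S) ((iota e, 0) + cplx_scale z (h1, h2)).
Proof.
have int := coneB_int HS Hsep He Hunit Hiota Hnorm Hdense.
set a := complex.Re z; set b := complex.Im z.
set N := Num.sqrt (`|h1| ^+ 2 + `|h2| ^+ 2).
have hN : N <= cnorm (h1, h2) by exact: (cnorm_ge _ (h1, h2)).
have N0 : 0 <= N := sqrtr_ge0 _.
have cz : cmod z = Num.sqrt (a ^+ 2 + b ^+ 2) by [].
have hz : Num.sqrt ((a - b) ^+ 2 + (a + b) ^+ 2) = Num.sqrt 2 * cmod z.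
  by rewrite cz -sqrtrM // (_ : _ + _ = 2 * (a ^+ 2 + b ^+ 2)) //; ring.
have hz' : Num.sqrt ((a + b) ^+ 2 + (a - b) ^+ 2) = Num.sqrt 2 * cmod z.
  by rewrite addrC hz.
have bnd : Num.sqrt 2 * cmod z * N < 1.
  apply: le_lt_trans Hz; rewrite [_ * Num.sqrt 2]mulrC; apply: ler_wpM2l => //.
  by rewrite mulr_ge0 ?sqrtr_ge0 ?cmod_ge0.
have c1 : `|(a - b) *: h1 - (a + b) *: h2| < 1.
  apply: le_lt_trans (ler_normB _ _) _; rewrite !normrZ.
  apply: le_lt_trans bnd; rewrite -hz; exact: CS.
have c2 : `|(a + b) *: h1 + (a - b) *: h2| < 1.
  apply: le_lt_trans (ler_normD _ _) _; rewrite !normrZ.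
  apply: le_lt_trans bnd; rewrite -hz'; exact: CS.
rewrite /cplx_scale /= -/a -/b.
exists (2^-1 +i* (- 2^-1)), (iota e + ((a *: h1 - b *: h2) - (b *: h1 + a *: h2))),
  (iota e + ((a *: h1 - b *: h2) + (b *: h1 + a *: h2))).
split.
  apply/negP => /eqP [] h _; move: h; apply/eqP; rewrite invr_eq0 pnatr_eq0 //.
split; first by apply: int; rewrite vec1.
split; first by apply: int; rewrite vec2.
rewrite /cplx_scale /=; congr pair.
  by rewrite scaleNr opprK -scalerDr vec3 scalerA mulVf ?pnatr_eq0 // scale1r.
by rewrite /= add0r scaleNr [RHS]addrC -scalerBr vec4 scalerA mulVf ?pnatr_eq0 // scale1r.
Qed.

Lemma L0_dual (V : topologicalLmodType R) (S : set (V -> R))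
  (B : completeNormedModType R) (iota : V -> B)
  (M : B -> R) (kappa : R) (HM : is_rlin (M : B -> R^o)) (cM : continuous M)
  (kp : 0 < kappa) (HMk : forall h, coneB iota S h -> kappa * `|h| <= M h) :
  dual_coneC (coneB iota S) (fun w => M w.1 +i* M w.2).
Proof.
pose L0 := fun w : B * B => M w.1 +i* M w.2.
change (dual_coneC (coneB iota S) L0).
have LD' u v : L0 (u + v) = L0 u + L0 v by rewrite /L0 /= !(rlinD HM).
have LS' c u : L0 (cplx_scale c u) = c * L0 u.
  rewrite /L0 /cplx_scale /= (rlinB HM) (rlinD HM) !(slinZ HM).
  by case: c => c1 c2; apply: cplx_eq => /=; ring.
split; first split; first exact: LD'.
  split; first exact: LS'.
  move=> u eps e0.
  have e2 : 0 < eps / 2 by rewrite divr_gt0.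
  have [d d0 hd] := cont_ball cM 0 _ e2.
  have hw (w : B) : `|w| < d -> `|M w| < eps / 2.
    by move=> hw; have := hd w; rewrite sub0r normrN (rlin0 HM) sub0r normrN; apply.
  exists d => // v hv.
  have -> : L0 v - L0 u = L0 (v - u) by rewrite -{1}(subrK u v) LD' addrK.
  have n1 : `|(v - u).1| <= cnorm (v - u).
    apply: le_trans (cnorm_ge _ (v - u)); rewrite -[leLHS]normr_id -sqrtr_sqr.
    by rewrite ler_sqrt ?addr_ge0 ?sqr_ge0 // lerDl sqr_ge0.
  have n2 : `|(v - u).2| <= cnorm (v - u).
    apply: le_trans (cnorm_ge _ (v - u)); rewrite -[leLHS]normr_id -sqrtr_sqr.
    by rewrite ler_sqrt ?addr_ge0 ?sqr_ge0 // lerDr sqr_ge0.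
  apply: le_lt_trans (cmod_le_ReIm _) _; rewrite /L0 /=.
  have := hw _ (le_lt_trans n1 hv); have := hw _ (le_lt_trans n2 hv); lra.
move=> w [c [x [y [c0 [cx [cy ->]]]]]]; rewrite LS' mulf_neq0 //.
apply/negP => /eqP [] hx _.
have := HMk x cx; rewrite hx; apply/negP; rewrite -ltNge pmulr_rgt0 // normr_gt0.
by case: cx.
Qed.

Lemma part2 (V : topologicalLmodType R) (S : set (V -> R))
  (HS : forall l, S l -> in_dual l)
  (Hsep : forall x : V, (forall l, S l -> l x = 0) -> x = 0)
  (e : V) (He : coneV S e)
  (Hunit : forall h : V, exists lam : R, 0 <= lam /\ coneV S (lam *: e - h))
  (B : completeNormedModType R) (iota : V -> B)
  (Hiota : is_rlin iota)
  (Hnorm : forall v, `|iota v| = cone_norm S e v)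
  (Hdense : forall (b : B) (eps : R), 0 < eps -> exists v, `|b - iota v| < eps)
  (h1 h2 : B) (z : R[i]) (Hz : cmod z * Num.sqrt 2 * cnorm (h1, h2) < 1)
  (L : B * B -> R[i]) (HL : dual_coneC (coneB iota S) L) :
  (1 + cmod z * Num.sqrt 2 * cnorm (h1, h2))^-1 <=
    cmod (L (iota e, 0) / L ((iota e, 0) + cplx_scale z (h1, h2))) <=
  (1 - cmod z * Num.sqrt 2 * cnorm (h1, h2))^-1.
Proof.
set r := cmod z * Num.sqrt 2 * cnorm (h1, h2) in Hz *.
have int := coneB_int HS Hsep He Hunit Hiota Hnorm Hdense.
case: HL => [HLd HnC].
set N := Num.sqrt (`|h1| ^+ 2 + `|h2| ^+ 2).
have hN : N <= cnorm (h1, h2) by exact: (cnorm_ge _ (h1, h2)).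
have N0 : 0 <= N := sqrtr_ge0 _.
have r0 : 0 <= r by rewrite /r !mulr_ge0 ?cmod_ge0 ?sqrtr_ge0 // (le_trans N0 hN).
have ce : coneB iota S (iota e) by rewrite -[iota e]addr0; apply: int; rewrite normr0.
set a := L (iota e, 0).
have a0 : a != 0.
  apply/negP => /eqP a0.
  have hc : coneC (coneB iota S) (iota e, iota e).
    exists 1, (iota e), (iota e); split; first exact: oner_neq0.
    split => //; split => //; rewrite /cplx_scale /=; congr pair;
    by rewrite /= !(scale0r, scaler0, scale1r, subr0, addr0, add0r, sub0r, oppr0).
  by move: (HnC _ hc); rewrite Lpair // -/a a0 mulr0 addr0 eqxx.
set A := cmod a.
have A0 : 0 < A by rewrite cmod_gt0.
have h12 : `|h1| + `|h2| <= Num.sqrt 2 * N.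
  have := CS 1 1 _ _ (normr_ge0 h1) (normr_ge0 h2).
  by rewrite normr1 !mul1r expr1n.
have hLh : cmod (L (h1, h2)) <= A * (Num.sqrt 2 * cnorm (h1, h2)).
  rewrite Lpair //; apply: le_trans (cmodD _ _) _; rewrite cmodi.
  have b1 := boundP HS Hsep He Hunit Hiota Hnorm Hdense HLd HnC h1.
  have b2 := boundP HS Hsep He Hunit Hiota Hnorm Hdense HLd HnC h2.
  rewrite -/a -/A in b1 b2.
  apply: le_trans (lerD b1 b2) _; rewrite -mulrDr; apply: ler_wpM2l; first exact: ltW.
  apply: le_trans h12 _; apply: ler_wpM2l => //; exact: sqrtr_ge0.
have hG : L ((iota e, 0) + cplx_scale z (h1, h2)) = a + z * L (h1, h2) by rewrite LD // LS.
rewrite hG; set w := z * L (h1, h2).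
have hw : cmod w <= r * A.
  rewrite /w cmodM (_ : r * A = cmod z * (A * (Num.sqrt 2 * cnorm (h1, h2)))); last by rewrite /r; ring.
  by apply: ler_wpM2l; rewrite ?cmod_ge0.
have up : cmod (a + w) <= A + r * A by apply: le_trans (cmodD _ _) _; rewrite lerD2l.
have lo : A - r * A <= cmod (a + w).
  have := cmodD (a + w) (- w); rewrite cmodN addrK -/A; lra.
have G0 : 0 < cmod (a + w).
  apply: lt_le_trans lo; rewrite subr_gt0 gtr_pMl //.
rewrite cmodM cmodV -/A.
have r1 : 0 < 1 - r by rewrite subr_gt0.
have r1' : 0 < 1 + r by lra.
apply/andP; split.
  rewrite ler_pdivlMr // [_ * _]mulrC -[_ / _]/(_ * _) ler_pdivrMr //.
  rewrite (_ : A * (1 + r) = A + r * A) //; ring.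
rewrite ler_pdivrMr // mulrC ler_pdivlMr //.
by rewrite (_ : A * (1 - r) = A - r * A) //; ring.
Qed.
End H.
Unset Implicit Arguments.

Theorem lemma5p13 (R : realType) (V : topologicalLmodType R)
  (S : set (V -> R))
  (HS : forall l, S l -> in_dual l)
  (Hsep : forall x : V, (forall l, S l -> l x = 0) -> x = 0)
  (e : V) (He : coneV S e)
  (Hunit : forall h : V, exists lam : R, 0 <= lam /\ coneV S (lam *: e - h))
  (B : completeNormedModType R) (iota : V -> B)
  (Hiota : is_rlin iota)
  (Hnorm : forall v, `|iota v| = cone_norm S e v)
  (Hdense : forall (b : B) (eps : R), 0 < eps -> exists v, `|b - iota v| < eps)
  (Hm : exists (m : V -> R) (M : B -> R) (kappa : R),
      Sstar S m /\ ext_of iota m M /\ m e = 1 /\ 0 < kappa < 1 /\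
      forall h, coneB iota S h -> kappa * `|h| <= M h)
  (h : B * B) (z : R[i])
  (Hz : cmod z * Num.sqrt 2 * cnorm h < 1) :
  let e' : B * B := (iota e, 0) in
  let r := cmod z * Num.sqrt 2 * cnorm h in
  coneC (coneB iota S) (e' + cplx_scale z h) /\
  (deltaC (coneB iota S) e' (e' + cplx_scale z h)%R <= (ln ((1 + r) / (1 - r)))%:E)%E /\
  (deltaC (coneB iota S) e' (e' + cplx_scale z h)%R < +oo)%E.
Proof.
move=> e' r; rewrite {}/r {}/e'.
case: h Hz => h1 h2 Hz.
have [m [M [kappa [_ [[HM [cM _]] [_ [/andP [kp _] HMk]]]]]]] := Hm.
set r := cmod z * Num.sqrt 2 * cnorm (h1, h2) in Hz *.
have r0 : 0 <= r.
  rewrite /r !mulr_ge0 ?cmod_ge0 ?sqrtr_ge0 //.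
  apply: le_trans (cnorm_ge _ (h1, h2)); exact: sqrtr_ge0.
have r1 : 0 < 1 - r by rewrite subr_gt0.
have r1' : 0 < 1 + r by lra.
have P1 := @part1 R V S HS Hsep e He Hunit B iota Hiota Hnorm Hdense h1 h2 z Hz.
have bnd := @part2 R V S HS Hsep e He Hunit B iota Hiota Hnorm Hdense h1 h2 z Hz.
have L0d := @L0_dual R V S B iota M kappa HM cM kp HMk.
pose T := [set (cmod q)%:E | q in Eset (coneB iota S) (iota e, 0%R) ((iota e, 0%R) + cplx_scale z (h1, h2))].
have Tb t : T t -> (((1 + r)^-1)%:E <= t <= ((1 - r)^-1)%:E)%E.
  case=> q [L HL <-] <-; rewrite !lee_fin; exact: bnd.
set L0 := (fun w => (M w.1 +i* M w.2)%C) in L0d.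
have T0 : T (cmod (L0 (iota e, 0%R) / L0 ((iota e, 0%R) + cplx_scale z (h1, h2))))%:E.
  by exists (L0 (iota e, 0%R) / L0 ((iota e, 0%R) + cplx_scale z (h1, h2))) => //; exists L0.
have [t0l t0u] := andP (Tb _ T0).
have hs1 : (ereal_sup T <= ((1 - r)^-1)%:E)%E by apply: ge_ereal_sup => t /Tb /andP [].
have hs2 : (((1 + r)^-1)%:E <= ereal_sup T)%E by apply: le_trans t0l _; exact: ereal_sup_ubound.
have hi1 : (ereal_inf T <= ((1 - r)^-1)%:E)%E by apply: le_trans _ t0u; exact: ereal_inf_lbound.
have hi2 : (((1 + r)^-1)%:E <= ereal_inf T)%E by apply: le_ereal_inf_tmp => t /Tb /andP [].
have lo0 : 0 < (1 + r)^-1 by rewrite invr_gt0.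
have fin : (deltaC (coneB iota S) (iota e, 0%R) ((iota e, 0%R) + cplx_scale z (h1, h2))%R <=
            (ln ((1 + r) / (1 - r))%R)%:E)%E.
  rewrite /deltaC -/T.
  move: hs1 hs2 hi1 hi2.
  case: (ereal_sup T) => [s'| |] //; case: (ereal_inf T) => [i'| |] //.
  rewrite !lee_fin => hs1 hs2 hi1 hi2.
  have i0 : 0 < i' by apply: lt_le_trans hi2.
  rewrite i0 lee_fin ler_ln ?posrE ?divr_gt0 //; last exact: lt_le_trans hs2.
  rewrite ler_pdivrMr //; apply: le_trans hs1 _.
  apply: le_trans (_ : _ <= (1 + r) / (1 - r) * (1 + r)^-1) _.
    by rewrite mulrAC mulfV ?mul1r // gt_eqF.
  by apply: ler_wpM2l => //; rewrite divr_ge0 // ltW.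
split => //; split => //.
by apply: le_lt_trans fin _; exact: ltry.
Qed.
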